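(* Let $T\ge1$, $\mathcal{X}_t=\mathbb{R}^{d_t}$ for $t\in\{0,\dots,T\}$, and $\mathcal{A}_1,\dots,\mathcal{A}_T$ finite sets. On a probability space, let $X_0$ be $\mathcal{X}_0$-valued, let $X_s(a_{1:s})$ be $\mathcal{X}_s$-valued random variables for $s\in\{1,\dots,T\}$, $a_{1:s}\in\mathcal{A}_{1:s}$, let $A_s$ be $\mathcal{A}_s$-valued random variables for $s\in\{1,\dots,T\}$, and fix $t\in\{1,\dots,T\}$ and real-valued random variables $(Y(a'_{1:t}) : a'_{1:t}\in\mathcal{A}_{1:t})$. Suppose that for some $a_{1:t}\in\mathcal{A}_{1:t}$, measurable $B_{0:t}\subseteq\mathcal{X}_{0:t}$ (i.e. measurable $B_s\subseteq\mathcal{X}_s$ for each $s$) and $\underline{y},\overline{y}\in\mathbb{R}$ we have $$\mathbb{P}(X_{0:t}(a_{1:t})\in B_{0:t})>0,\qquad \mathbb{P}\big(\underline{y}\le Y(a_{1:t})\le \overline{y}\ \big|\ X_{0:t}(a_{1:t})\in B_{0:t}\big)=1.$$ Define $N:=\max\{0\le s\le t : A_{1:s}=a_{1:s}\}$ and $$\underline{Y}:=\mathbb{1}(A_{1:t}=a_{1:t})\,Y(A_{1:t})+\mathbb{1}(A_{1:t}\ne a_{1:t})\,\underline{y},\qquad \overline{Y}:=\mathbb{1}(A_{1:t}=a_{1:t})\,Y(A_{1:t})+\mathbb{1}(A_{1:t}\ne a_{1:t})\,\overline{y}.$$ Then $$\mathbb{E}[\underline{Y}\mid X_{0:N}(A_{1:N})\in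 B_{0:N}]\le \mathbb{E}[Y(a_{1:t})\mid X_{0:t}(a_{1:t})\in B_{0:t}]\le \mathbb{E}[\overline{Y}\mid X_{0:N}(A_{1:N})\in B_{0:N}].$$
   Context: Notation: $z_{t:t'}=(z_t,\dots,z_{t'})$ (empty if $t>t'$); $X_{0:s}(a_{1:s})=(X_0,X_1(a_1),\dots,X_s(a_{1:s}))$; $X_{0:s}(a_{1:s})\in B_{0:s}$ means $X_0\in B_0$ and $X_r(a_{1:r})\in B_r$ for $1\le r\le s$; $Y(A_{1:t})$ and $X_{0:N}(A_{1:N})$ denote the potential outcomes evaluated at the random actions (with $N$ random); $A_{1:0}=a_{1:0}$ holds vacuously, so $N\ge0$ and $X_{0:0}(A_{1:0})=X_0$. No assumption is made on the joint dependence between the actions $A_{1:T}$ and the potential outcomes. *)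

(* Defs.v *)
From HB Require Import structures.
From mathcomp Require Import all_boot all_order all_algebra.
From mathcomp Require Import all_classical all_reals all_analysis.
Set Implicit Arguments. Unset Strict Implicit. Unset Printing Implicit Defensive.
Import Order.TTheory GRing.Theory Num.Theory.
Import numFieldNormedType.Exports.
Local Open Scope classical_set_scope.
Local Open Scope ring_scope.

(** Borel sigma-algebra on R^n = 'rV[R]_n (generated by the open sets of the
    usual (product/sup-norm) topology on row vectors). *)
Definition rV_borel (R : realType) (n : nat) : set (set 'rV[R]_n) :=
  <<s [set U : set 'rV[R]_n | open U] >>.

(** action histories a_{1:s} in A_1 x ... x A_s *)
Definition hist (Act : nat -> finType) (s : nat) := forall i : 'I_s, Act i.+1.

Definition prefix (Act : nat -> finType) (t : nat) (a : hist Act t)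
  (r : 'I_t.+1) : hist Act r :=
  fun i => a (widen_ord (ltnSE (ltn_ord r)) i).

Definition obs_hist (Act : nat -> finType) (Om : Type)
  (A : forall s : nat, Om -> Act s) (s : nat) (w : Om) : hist Act s :=
  fun i => A i.+1 w.

Definition agree (Act : nat -> finType) (Om : Type)
  (A : forall s : nat, Om -> Act s) (t : nat) (a : hist Act t)
  (r : 'I_t.+1) (w : Om) : bool :=
  [forall i : 'I_r, A i.+1 w == @prefix Act t a r i].

Definition agree_full (Act : nat -> finType) (Om : Type)
  (A : forall s : nat, Om -> Act s) (t : nat) (a : hist Act t) (w : Om) : bool :=
  [forall i : 'I_t, A i.+1 w == a i].

Definition Nidx (Act : nat -> finType) (Om : Type)
  (A : forall s : nat, Om -> Act s) (t : nat) (a : hist Act t) (w : Om) : nat :=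
  \max_(r < t.+1 | agree A a r w) (r : nat).

Definition ev_fixed (R : realType) (Act : nat -> finType) (Om : Type)
  (d : nat -> nat) (X : forall s : nat, hist Act s -> Om -> 'rV[R]_(d s))
  (B : forall s : nat, set 'rV[R]_(d s)) (t : nat) (a : hist Act t) : set Om :=
  [set w | forall r : 'I_t.+1, B r (X r (@prefix Act t a r) w)].

Definition ev_random (R : realType) (Act : nat -> finType) (Om : Type)
  (d : nat -> nat) (X : forall s : nat, hist Act s -> Om -> 'rV[R]_(d s))
  (B : forall s : nat, set 'rV[R]_(d s))
  (A : forall s : nat, Om -> Act s) (t : nat) (a : hist Act t) : set Om :=
  [set w | forall r : nat, (r <= Nidx A a w)%N -> B r (X r (@obs_hist Act Om A r w) w)].

Definition Ybound (R : realType) (Act : nat -> finType) (Om : Type)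
  (A : forall s : nat, Om -> Act s) (t : nat) (a : hist Act t)
  (Y : hist Act t -> Om -> R) (y : R) (w : Om) : R :=
  if agree_full A a w then Y (@obs_hist Act Om A t w) w else y.

Definition cond_prob (d0 : measure_display) (Om : measurableType d0)
  (R : realType) (P : probability Om R) (C F : set Om) : \bar R :=
  (P (C `&` F) * ((fine (P F))^-1)%:E)%E.

Definition cond_exp (d0 : measure_display) (Om : measurableType d0)
  (R : realType) (P : probability Om R) (Z : Om -> R) (F : set Om) : \bar R :=
  ((\int[P]_(w in F) (Z w)%:E) * ((fine (P F))^-1)%:E)%E.

(* Main.v *)
Require Import Defs.
From HB Require Import structures.
From mathcomp Require Import all_boot all_order all_algebra.
From mathcomp Require Import all_classical all_reals all_analysis.
Import Order.TTheory GRing.Theory Num.Theory.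
Import numFieldNormedType.Exports.
Local Open Scope classical_set_scope.
Local Open Scope ring_scope.

Lemma meas_forall_seq d0 (Om : measurableType d0) (I : eqType) (S : I -> set Om)
  (s : seq I) : (forall i, measurable (S i)) ->
  measurable [set w | forall i, i \in s -> S i w].
Proof.
move=> mS; elim: s => [|x s IH].
  by rewrite (_ : [set w | _] = setT); [exact: measurableT|apply/seteqP; split].
rewrite (_ : [set w | _] = S x `&` [set w | forall i, i \in s -> S i w]).
  exact: measurableI.
apply/seteqP; split => w /=.
  by move=> H; split => [|i iS]; apply: H; rewrite inE ?eqxx ?iS ?orbT.
by move=> [Sx H] i; rewrite inE => /orP[/eqP->|/H].
Qed.

Lemma meas_forall_fin d0 (Om : measurableType d0) (I : finType) (S : I -> set Om) :
  (forall i, measurable (S i)) -> measurable [set w | forall i, S i w].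
Proof.
move=> mS; rewrite (_ : [set w | _] = [set w | forall i, i \in enum I -> S i w]).
  exact: meas_forall_seq.
by apply/seteqP; split => w /= H i; [move=> _|]; apply: H; rewrite ?mem_enum.
Qed.

Lemma prefix_irr (Act : nat -> finType) (t : nat) (a : hist Act t) (i : nat)
  (p q : (i < t)%N) : a (Ordinal p) = a (Ordinal q).
Proof. by rewrite (bool_irrelevance p q). Qed.

Lemma agree_down (Act : nat -> finType) (Om : Type)
  (A : forall s : nat, Om -> Act s) (t : nat) (a : hist Act t)
  (r r' : 'I_t.+1) (w : Om) : (r' <= r)%N -> agree A a r w -> agree A a r' w.
Proof.
move=> le /forallP H; apply/forallP => -[i Hi].
have Hi' : (i < r)%N by apply: leq_trans Hi le.
move/eqP: (H (Ordinal Hi')) => ->; apply/eqP.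
rewrite /Defs.prefix /widen_ord /=; exact: prefix_irr.
Qed.

Section Comb.
Variables (Act : nat -> finType) (Om : Type) (A : forall s : nat, Om -> Act s)
  (t : nat) (a : hist Act t).

Lemma Nidx_le w : (Nidx A a w <= t)%N.
Proof. by apply/bigmax_leqP => r _; rewrite -ltnS ltn_ord. Qed.

Lemma agree0 w : agree A a (@ord0 t) w.
Proof. by apply/forallP => -[]. Qed.

Lemma le_Nidx (r : 'I_t.+1) w : (r <= Nidx A a w)%N = agree A a r w.
Proof.
apply/idP/idP; last by move=> H; exact: (leq_bigmax_cond _ H).
apply: contraLR => nag; rewrite -ltnNge.
have r0 : (0 < r)%N.
  rewrite lt0n; apply: contra nag => /eqP r0.
  have -> : r = ord0 by apply: val_inj; rewrite /= r0.
  exact: agree0.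
rewrite -[r : nat]prednK // ltnS; apply/bigmax_leqP => r' ag'.
rewrite -ltnS prednK //; rewrite ltnNge; apply: contra nag => le.
exact: agree_down le ag'.
Qed.

Lemma agree_obs (r : 'I_t.+1) w : agree A a r w -> obs_hist A (s:=r) w = Defs.prefix a (r:=r).
Proof.
move/forallP => H; apply: functional_extensionality_dep => i.
by apply/eqP; exact: H.
Qed.

Lemma full_agree w : agree_full A a w -> forall r : 'I_t.+1, agree A a r w.
Proof.
move=> /forallP H r; apply/forallP => -[i Hi].
have Hit : (i < t)%N by apply: leq_trans Hi _; rewrite -ltnS ltn_ord.
move/eqP: (H (Ordinal Hit)) => ->; apply/eqP.
rewrite /Defs.prefix /widen_ord /=; exact: prefix_irr.
Qed.

Lemma full_obs w : agree_full A a w -> obs_hist A (s:=t) w = a.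
Proof.
move/forallP => H; apply: functional_extensionality_dep => i.
by apply/eqP; exact: H.
Qed.

End Comb.
Arguments agree_obs {Act Om A t a r w}.
Arguments full_agree {Act Om A t a w}.
Arguments full_obs {Act Om A t a w}.
Arguments le_Nidx {Act Om A t a}.
Arguments Nidx_le {Act Om A t a}.
Arguments agree_down {Act Om A t a r r' w}.

Lemma ev_random_eq (R : realType) (Act : nat -> finType) (Om : Type)
  (d : nat -> nat) (X : forall s : nat, hist Act s -> Om -> 'rV[R]_(d s))
  (B : forall s : nat, set 'rV[R]_(d s))
  (A : forall s : nat, Om -> Act s) (t : nat) (a : hist Act t) :
  ev_random X B A a =
  [set w | forall r : 'I_t.+1, agree A a r w -> B r (X r (Defs.prefix a (r:=r)) w)].
Proof.
apply/seteqP; split => w /= H.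
  by move=> r ag; rewrite -(agree_obs ag); apply: H; rewrite le_Nidx.
move=> r le.
have rt : (r < t.+1)%N by rewrite ltnS (leq_trans le) // Nidx_le.
have ag : agree A a (Ordinal rt) w by rewrite -le_Nidx.
by have := H (Ordinal rt) ag; rewrite -(agree_obs ag).
Qed.
From mathcomp Require Import lra.

Lemma norm_bnd (R : realType) (ylo yhi x : R) : ylo <= x <= yhi ->
  `|x| <= `|ylo| + `|yhi|.
Proof.
move=> /andP[h1 h2]; rewrite ler_norml.
have := ler_norm yhi; have := ler_norm (- ylo); rewrite normrN.
have := normr_ge0 ylo; have := normr_ge0 yhi.
move=> *; apply/andP; split; lra.
Qed.

Arguments norm_bnd {R ylo yhi x}.

Lemma bnd_integrable d0 (Om : measurableType d0) (R : realType)
  (P : probability Om R) (D : set Om) (h : Om -> R) (M : R) :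
  measurable D -> measurable_fun setT h -> (forall w, `|h w| <= M) ->
  P.-integrable D (EFin \o h).
Proof.
move=> mD mh hM.
apply: (@le_integrable _ _ _ P D mD _ (EFin \o cst M)); last first.
  exact: finite_measure_integrable_cst.
  2: exact/measurable_realfun.measurable_EFinP/(measurable_funS measurableT).
move=> w _ /=; rewrite lee_fin (le_trans (hM w)) //.
exact: ler_norm.
Qed.

Arguments bnd_integrable {d0 Om R P D h M}.

Lemma probE d0 (Om : measurableType d0) (R : realType)
  (P : probability Om R) (S : set Om) : measurable S ->
  P S = (fine (P S))%:E.
Proof.
move=> mS; rewrite fineK // ge0_fin_numE //.
by rewrite (le_lt_trans (probability_le1 P mS)) // ltey.
Qed.

Theorem theorem2 (R : realType) (T : nat) (d : nat -> nat)
  (Act : nat -> finType)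
  (d0 : measure_display) (Om : measurableType d0) (P : probability Om R)
  (X : forall s : nat, hist Act s -> Om -> 'rV[R]_(d s))
  (A : forall s : nat, Om -> Act s)
  (t : nat) (Y : hist Act t -> Om -> R)
  (a : hist Act t) (B : forall s : nat, set 'rV[R]_(d s)) (ylo yhi : R) :
  (1 <= T)%N -> (1 <= t <= T)%N ->
  (* X_s(a_{1:s}) are R^{d_s}-valued random variables, s = 0..T *)
  (forall (s : nat) (h : hist Act s), (s <= T)%N ->
     forall C : set 'rV[R]_(d s), rV_borel C -> measurable (X s h @^-1` C)) ->
  (* A_s are A_s-valued random variables (discrete sigma-algebra), s = 1..T *)
  (forall s : nat, (1 <= s <= T)%N ->
     forall C : set (Act s), measurable (A s @^-1` C)) ->
  (* Y(a'_{1:t}) real random variables *)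
  (forall h : hist Act t, measurable_fun setT (Y h)) ->
  (* B_s measurable, s = 0..t *)
  (forall s : nat, (s <= t)%N -> rV_borel (B s)) ->
  (0 < P (ev_fixed X B a))%E ->
  cond_prob P [set w | ylo <= Y a w <= yhi] (ev_fixed X B a) = 1%E ->
  (cond_exp P (Ybound A a Y ylo) (ev_random X B A a)
     <= cond_exp P (Y a) (ev_fixed X B a)
     <= cond_exp P (Ybound A a Y yhi) (ev_random X B A a))%E.
Proof.
move=> T1 /andP[t1 tT] mX mA mY mB PF0 Hcp.
have rT (r : 'I_t.+1) : (r <= T)%N by rewrite (leq_trans _ tT) // -ltnS.
have mpre (r : 'I_t.+1) : measurable (X r (Defs.prefix a (r:=r)) @^-1` B r).
  by apply: mX; [exact: rT|apply: mB; rewrite -ltnS].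
have mF : measurable (ev_fixed X B a).
  exact: (@meas_forall_fin _ _ _ _ mpre).
have magr (r : 'I_t.+1) : measurable [set w | agree A a r w].
  rewrite (_ : [set w | _] = [set w | forall i : 'I_r,
     (A i.+1 @^-1` [set Defs.prefix a (r:=r) i]) w]).
    apply: meas_forall_fin => i; apply: mA; rewrite ltn0Sn /=.
    by rewrite (leq_trans _ (rT r)).
  apply/seteqP; split => w /=; rewrite /agree.
    by move/forallP => H i; apply/eqP; exact: H.
  by move=> H; apply/forallP => i; apply/eqP; exact: H.
have mag : measurable [set w | agree_full A a w].
  rewrite (_ : [set w | _] = [set w | forall i : 'I_t, (A i.+1 @^-1` [set a i]) w]).
    apply: meas_forall_fin => i; apply: mA; rewrite ltn0Sn /=.
    by rewrite (leq_trans _ tT).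
  apply/seteqP; split => w /=; rewrite /agree.
    by move/forallP => H i; apply/eqP; exact: H.
  by move=> H; apply/forallP => i; apply/eqP; exact: H.
have mG : measurable (ev_random X B A a).
  rewrite ev_random_eq.
  rewrite (_ : [set w | _] = [set w | forall r : 'I_t.+1,
     (~` [set w | agree A a r w] `|` X r (Defs.prefix a (r:=r)) @^-1` B r) w]).
    by apply: meas_forall_fin => r; apply: measurableU; [exact: measurableC|].
  apply/seteqP; split => w /= H r.
    by have [ag|nag] := boolP (agree A a r w); [right; exact: H|left; apply/negP].
  by move=> ag; case: (H r) => //.
set F := ev_fixed X B a in PF0 Hcp mF *.
set G := ev_random X B A a in mG *.
have FG : F `<=` G.
  by move=> w Fw; rewrite /G ev_random_eq => r _; exact: Fw.
have GagF : G `&` [set w | agree_full A a w] `<=` F.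
  move=> w [Gw agw] r; move: Gw; rewrite /G ev_random_eq => /(_ r); apply.
  exact: full_agree.
set bnd := [set w | ylo <= Y a w <= yhi] in Hcp.
have mbnd : measurable bnd.
  have := mY a measurableT `[ylo, yhi]%classic (measurable_itv _).
  by rewrite setTI; congr measurable.
have hPF : P F = (fine (P F))%:E by exact: probE.
set pF := fine (P F) in hPF.
have pF0 : 0 < pF by rewrite -lte_fin -hPF.
have hPb : P (bnd `&` F) = (fine (P (bnd `&` F)))%:E by apply: probE; exact: measurableI.
set pb := fine (P (bnd `&` F)) in hPb.
have pbF : pb = pF.
  move: Hcp; rewrite /cond_prob hPb -EFinM => -[] H.
  by rewrite -[pb]mulr1 -(mulVf (lt0r_neq0 pF0)) mulrA H mul1r.
have mN : measurable (F `\` bnd) by exact: measurableD.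
have PN : P (F `\` bnd) = 0.
  rewrite measureD //.
    transitivity (pF%:E - pb%:E)%E; last by rewrite pbF subee.
    by congr (_ - _)%E; [exact: hPF|rewrite (setIC F bnd); exact: hPb].
  by apply: le_lt_trans (probability_le1 P mF) _; exact: ltey.
have ylohi : ylo <= yhi.
  have : bnd `&` F != set0.
    have h0 : P set0 = 0 := measure0 _.
    apply/eqP => E; move: pF0; rewrite -pbF /pb E h0 /= ltxx //.
  by case/set0P => w [/andP[h1 h2] _]; exact: le_trans h1 h2.
pose yc := (cst ylo) \max ((cst yhi) \min (Y a)).
have ycE w : bnd w -> yc w = Y a w.
  by move=> /andP[h1 h2]; rewrite /yc /= min_r // max_r.
have ycb w : ylo <= yc w <= yhi.
  by rewrite /yc /= le_max lexx /= ge_max ylohi /= ge_min lexx.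
have myc : measurable_fun setT yc.
  exact: measurable_realfun.measurable_maxr (measurable_cst _) (measurable_realfun.measurable_minr (measurable_cst _) (mY a)).
pose L y w := if agree_full A a w then yc w else y.
have mL y : measurable_fun setT (L y).
  apply: measurable_fun_ifT => //; apply: (measurable_fun_bool true).
  by rewrite setTI.
have mLr y : measurable_fun setT (fun w => if agree_full A a w then Y a w else y).
  apply: measurable_fun_ifT => //; apply: (measurable_fun_bool true).
  by rewrite setTI.
have YbE y : Ybound A a Y y = fun w => if agree_full A a w then Y a w else y.
  apply: funext => w; rewrite /Ybound; case: ifP => // ag.
  by rewrite (full_obs ag).
have M0 : forall y w, `|L y w| <= `|ylo| + `|yhi| + `|y|.
  move=> y w; rewrite /L; case: ifP => _.
    by rewrite (le_trans (norm_bnd (ycb w))) // lerDl.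
  by rewrite lerDr addr_ge0.
have Myc : forall w, `|yc w| <= `|ylo| + `|yhi| by move=> w; exact: norm_bnd.
have iyc : P.-integrable F (EFin \o yc) by exact: bnd_integrable Myc.
have iL y : P.-integrable F (EFin \o L y) by exact: bnd_integrable (M0 y).
have I1 : (\int[P]_(w in F) (Y a w)%:E = \int[P]_(w in F) (yc w)%:E)%E.
  apply: ae_eq_integral => //.
  - exact/measurable_realfun.measurable_EFinP/(measurable_funS measurableT _ (mY a)).
  - exact/measurable_realfun.measurable_EFinP/(measurable_funS measurableT _ myc).
  exists (F `\` bnd); split => // w /= /not_implyP [Fw neq]; split => // bw.
  by apply: neq; rewrite ycE.
have I2 y : (\int[P]_(w in G) (Ybound A a Y y w)%:E = \int[P]_(w in G) (L y w)%:E)%E.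
  rewrite YbE; apply: ae_eq_integral => //.
  - exact/measurable_realfun.measurable_EFinP/(measurable_funS measurableT _ (mLr y)).
  - exact/measurable_realfun.measurable_EFinP/(measurable_funS measurableT _ (mL y)).
  exists (F `\` bnd); split => // w /= /not_implyP [Gw]; rewrite /L.
  case: ifP => // ag neq; split; first exact: GagF.
  by move=> bw; apply: neq; rewrite ycE.
have mGF : measurable (G `\` F) by exact: measurableD.
have disj : [disjoint F & G `\` F].
  by apply/disj_setPS => w [Fw [_ nFw]].
have I3 y : (\int[P]_(w in G) (L y w)%:E =
   \int[P]_(w in F) (L y w)%:E + \int[P]_(w in G `\` F) (L y w)%:E)%E.
  rewrite -{1}(setDUK FG) integral_setU //; rewrite setDUK //.
  exact/measurable_realfun.measurable_EFinP/(measurable_funS measurableT _ (mL y)).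
have I4 y : (\int[P]_(w in G `\` F) (L y w)%:E = y%:E * P (G `\` F))%E.
  rewrite -integral_cst //; apply: eq_integral => w; rewrite inE => -[Gw nFw].
  rewrite /L; case: ifP => // ag; exfalso; apply: nFw; exact: GagF.
have I5 : (\int[P]_(w in F) (L ylo w)%:E <= \int[P]_(w in F) (yc w)%:E)%E.
  apply: le_integral => //; [exact: iL|].
  by move=> w _; rewrite lee_fin /L; case: ifP => _ //; case/andP: (ycb w).
have I5' : (\int[P]_(w in F) (yc w)%:E <= \int[P]_(w in F) (L yhi w)%:E)%E.
  apply: le_integral => //; [exact: iL|].
  by move=> w _; rewrite lee_fin /L; case: ifP => _ //; case/andP: (ycb w).
have I6 : (ylo%:E * P F <= \int[P]_(w in F) (yc w)%:E)%E.
  rewrite -integral_cst //; apply: le_integral => //.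
    exact: finite_measure_integrable_cst.
  by move=> w _; rewrite lee_fin; case/andP: (ycb w).
have I6' : (\int[P]_(w in F) (yc w)%:E <= yhi%:E * P F)%E.
  rewrite -integral_cst //; apply: le_integral => //.
    exact: finite_measure_integrable_cst.
  by move=> w _; rewrite lee_fin; case/andP: (ycb w).
have he : (\int[P]_(w in F) (yc w)%:E = (fine (\int[P]_(w in F) (yc w)%:E))%:E)%E.
  by rewrite fineK //; exact: integrable_fin_num.
have hl : (\int[P]_(w in F) (L ylo w)%:E = (fine (\int[P]_(w in F) (L ylo w)%:E))%:E)%E.
  by rewrite fineK //; exact: (integrable_fin_num mF (iL ylo)).
have hu : (\int[P]_(w in F) (L yhi w)%:E = (fine (\int[P]_(w in F) (L yhi w)%:E))%:E)%E.
  by rewrite fineK //; exact: (integrable_fin_num mF (iL yhi)).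
set e := fine (\int[P]_(w in F) (yc w)%:E) in he.
set l := fine (\int[P]_(w in F) (L ylo w)%:E) in hl.
set u := fine (\int[P]_(w in F) (L yhi w)%:E) in hu.
have hPD : P (G `\` F) = (fine (P (G `\` F)))%:E by exact: probE.
set pD := fine (P (G `\` F)) in hPD.
have pD0 : 0 <= pD by rewrite -lee_fin -hPD measure_ge0.
have hPG : P G = (pF + pD)%:E.
  have : P (F `|` (G `\` F)) = (P F + P (G `\` F))%E.
    by apply: measureU => //; apply/disj_set2P.
  by rewrite setDUK // hPF hPD.
move: I5 I5' I6 I6'; rewrite he hl hu hPF !lee_fin => le1 le2 le3 le4.
rewrite /cond_exp (I2 ylo) (I2 yhi) (I3 ylo) (I3 yhi) (I4 ylo) (I4 yhi) I1.
rewrite he hl hu hPD hPG hPF /=.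
have pFD : 0 < pF + pD by rewrite ltr_wpDr.
have H1 : (l + ylo * pD) / (pF + pD) <= e / pF.
  rewrite ler_pdivlMr // mulrAC ler_pdivrMr //.
  have h1 := ler_wpM2r (ltW pF0) le1.
  have h2 := ler_wpM2r pD0 le3.
  nra.
have H2 : e / pF <= (u + yhi * pD) / (pF + pD).
  rewrite ler_pdivlMr // mulrAC ler_pdivrMr //.
  have h1 := ler_wpM2r (ltW pF0) le2.
  have h2 := ler_wpM2r pD0 le4.
  nra.
have -> : ((l%:E + ylo%:E * pD%:E) * ((pF + pD)^-1)%:E = ((l + ylo*pD) / (pF+pD))%:E)%E.
  by rewrite EFinM EFinD EFinM.
have -> : ((u%:E + yhi%:E * pD%:E) * ((pF + pD)^-1)%:E = ((u + yhi*pD) / (pF+pD))%:E)%E.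
  by rewrite EFinM EFinD EFinM.
by rewrite -EFinM !lee_fin H1 H2.
Qed.
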